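(* Let $\mathcal{T}_j=(T_{j,t})_{t\ge0}$, $j=1,\dots,n$, be commuting contractive semigroups on a Hilbert space $\mathcal{K}$ with cogenerators $T_1,\dots,T_n$, and let $\mathcal{H}$ be a closed subspace of $\mathcal{K}$. Then $\overline{\operatorname{span}}\{T_{1,t_1}T_{2,t_2}\cdots T_{n,t_n}h:h\in\mathcal{H},\ t_1,\dots,t_n\in\mathbb{R}_+\}=\mathcal{K}$ if and only if $\overline{\operatorname{span}}\{T_1^{m_1}T_2^{m_2}\cdots T_n^{m_n}h:h\in\mathcal{H},\ m_1,\dots,m_n\in\mathbb{Z}_+\}=\mathcal{K}$.
   Context: A contractive semigroup is a strongly continuous one-parameter semigroup $(T_t)_{t\ge0}$ of contractions with $T_0=I$; its cogenerator is $T=(A+I)(A-I)^{-1}$, where $A$ is the generator. Semigroups commute if $T_{i,t}T_{j,t}=T_{j,t}T_{i,t}$ for all $t\ge0$ (equivalently, their cogenerators commute). *)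

(* Defs.v *)
From HB Require Import structures.
From mathcomp Require Import all_boot all_order all_algebra.
From mathcomp Require Import all_classical all_reals all_analysis.
From mathcomp Require Import complex.
Import Order.TTheory GRing.Theory Num.Theory.
Import numFieldNormedType.Exports.

Set Implicit Arguments.
Unset Strict Implicit.
Unset Printing Implicit Defensive.

Local Open Scope classical_set_scope.
Local Open Scope ring_scope.

Section Defs.
Variable R : realType.
Variable V : completeNormedModType R[i].

(* [ip] is an inner product on V inducing its norm: together with the
   completeness of V this says V is a complex Hilbert space. *)
Definition is_inner_product_of_norm (ip : V -> V -> R[i]) : Prop :=
  [/\ (forall (a : R[i]) (x y z : V), ip (a *: x + y) z = a * ip x z + ip y z),
      (forall x y : V, ip x y = Num.conj (ip y x)) &
      (forall x : V, `|x| ^+ 2 = ip x x)].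

(* (S t)_{t >= 0} is a strongly continuous semigroup of (linear) contractions
   with S 0 = I.  Only the values at t >= 0 are relevant. *)
Definition contractive_semigroup (S : R -> V -> V) : Prop :=
  [/\ (forall t : R, 0 <= t ->
         forall (a : R[i]) (x y : V), S t (a *: x + y) = a *: S t x + S t y),
      (forall x : V, S 0 x = x),
      (forall s t : R, 0 <= s -> 0 <= t -> forall x : V, S (s + t) x = S s (S t x)),
      (forall t : R, 0 <= t -> forall x : V, `|S t x| <= `|x|) &
      (forall x : V, (fun t : R => S t x) @ 0^'+ --> x)].

(* The generator A of S, as its graph: x \in D(A) and A x = z. *)
Definition generator_graph (S : R -> V -> V) (x z : V) : Prop :=
  (fun t : R => (real_complex R (t^-1)) *: (S t x - x)) @ 0^'+ --> z.

(* T is the cogenerator (A + I)(A - I)^{-1} of S: for every y, with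
   x = (A - I)^{-1} y (x \in D(A), A x - x = y), T y = A x + x. *)
Definition cogenerator (S : R -> V -> V) (T : V -> V) : Prop :=
  forall y : V, exists x z : V,
    [/\ generator_graph S x z, z - x = y & T y = z + x].

Definition commuting_semigroups (n : nat) (S : 'I_n -> R -> V -> V) : Prop :=
  forall (i j : 'I_n) (t : R), 0 <= t -> forall x : V,
    S i t (S j t x) = S j t (S i t x).

Definition closed_subspace (H : set V) : Prop :=
  [/\ closed H, H 0 &
      forall (a : R[i]) (x y : V), H x -> H y -> H (a *: x + y)].

Definition span (A : set V) : set V :=
  [set v | exists (m : nat) (c : 'I_m -> R[i]) (f : 'I_m -> V),
      (forall k, A (f k)) /\ v = \sum_(k < m) c k *: f k].

Definition closed_span (A : set V) : set V := closure (span A).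

Definition compose_all (n : nat) (F : 'I_n -> V -> V) (h : V) : V :=
  foldr (fun j v => F j v) h (enum 'I_n).

Definition semigroup_orbit (n : nat) (S : 'I_n -> R -> V -> V) (H : set V)
  : set V :=
  [set v | exists (h : V) (t : 'I_n -> R),
      [/\ H h, (forall j, 0 <= t j) & v = compose_all (fun j => S j (t j)) h]].

Definition cogenerator_orbit (n : nat) (T : 'I_n -> V -> V) (H : set V)
  : set V :=
  [set v | exists (h : V) (m : 'I_n -> nat),
      H h /\ v = compose_all (fun j => iter (m j) (T j)) h].

End Defs.

(* Main.v *)
Require Import Defs.
From HB Require Import structures.
From mathcomp Require Import all_boot all_order all_algebra.
From mathcomp Require Import all_classical all_reals all_analysis.
From mathcomp Require Import complex.
From mathcomp Require Import ring lra.
Import Order.TTheory GRing.Theory Num.Theory.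
Import numFieldNormedType.Exports.
Local Open Scope classical_set_scope.
Local Open Scope ring_scope.
Set Implicit Arguments.
Unset Strict Implicit.
Unset Printing Implicit Defensive.
Local Open Scope complex_scope.


Section Norm.
Variable R : realType.
Variable V : completeNormedModType R[i].

Definition nv (x : V) : R := complex.Re `|x|.

Lemma nvE x : `|x| = (nv x)%:C.
Proof. by rewrite /nv RRe_real // ger0_real. Qed.

Lemma nv_ge0 x : 0 <= nv x.
Proof. by rewrite -ler0c -nvE. Qed.

Lemma nvD x y : nv (x + y) <= nv x + nv y.
Proof. by rewrite -lecR rmorphD /= -!nvE ler_normD. Qed.

Lemma nvN x : nv (- x) = nv x.
Proof. by rewrite /nv normrN. Qed.

Lemma nvB x y : nv (x - y) = nv (y - x).
Proof. by rewrite /nv distrC. Qed.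

Lemma nv0 : nv 0 = 0.
Proof. by rewrite /nv normr0. Qed.

Lemma normcR (t : R) : `|t%:C| = `|t|%:C.
Proof. by rewrite normc_def /= expr0n addr0 sqrtr_sqr. Qed.

Lemma nvZ (t : R) x : nv (t%:C *: x) = `|t| * nv x.
Proof. by apply: complexI; rewrite -nvE normrZ normcR nvE rmorphM. Qed.

Lemma nv_eq0 x : nv x <= 0 -> x = 0.
Proof.
move=> h; apply/normr0_eq0; rewrite nvE.
by have -> : nv x = 0 by apply/eqP; rewrite eq_le h nv_ge0.
Qed.

Lemma closure_eps (A : set V) x :
  (forall e : R, 0 < e -> exists y, A y /\ nv (x - y) <= e) -> closure A x.
Proof.
move=> h B /nbhs_ballP [e /= e0 sB].
have e0' : 0 < complex.Re e.
  by move: e0; rewrite ltcE => /andP[_]; rewrite /=.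
have [y [Ay hy]] := h (complex.Re e / 2) (divr_gt0 e0' (ltr0Sn _ 1)).
exists y; split => //; apply: sB; rewrite -ball_normE /= nvE.
have : (nv (x - y))%:C < (complex.Re e)%:C.
  rewrite ltcR; apply: (le_lt_trans hy); rewrite ltr_pdivrMr // ltr_pMr //.
  by rewrite ltr1n.
by rewrite RRe_real // gtr0_real.
Qed.

Lemma closure_epsP (A : set V) x : closure A x ->
  forall e : R, 0 < e -> exists y, A y /\ nv (x - y) <= e.
Proof.
move=> h e e0.
have : nbhs x (ball x e%:C) by apply: nbhsx_ballx; rewrite ltcR.
move=> /h [y [Ay bxy]]; exists y; split => //.
by move: bxy; rewrite -ball_normE /= nvE ltcR => /ltW.
Qed.

End Norm.


Section Near.
Variable R : realType.

Lemma near_rightP (P : R -> Prop) : (\forall t \near 0^'+, P t) ->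
  exists2 d : R, 0 < d & forall t, 0 < t -> t < d -> P t.
Proof.
move=> /nbhs_ballP [d /= d0 hd]; exists d => // t t0 td; apply: hd => //.
by rewrite /ball /= sub0r normrN gtr0_norm.
Qed.

Lemma near_rightI (P : R -> Prop) :
  (exists2 d : R, 0 < d & forall t, 0 < t -> t < d -> P t) ->
  \forall t \near 0^'+, P t.
Proof.
move=> [d d0 hd]; apply/nbhs_ballP; exists d => //= t.
rewrite /ball /= sub0r normrN => htd t0; apply: hd => //.
by rewrite gtr0_norm in htd.
Qed.

Lemma complex_pos (e : R[i]) : 0 < e -> 0 < complex.Re e /\ e = (complex.Re e)%:C.
Proof.
move=> e0; split; first by move: e0; rewrite ltcE => /andP[_].
by rewrite RRe_real // gtr0_real.
Qed.

End Near.

Section Semigroup.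
Variable R : realType.
Variable V : completeNormedModType R[i].
Variable S : R -> V -> V.
Hypothesis hS : contractive_semigroup S.
Let hS' := hS.
Let hSu : _ := ltac:(let t := eval unfold contractive_semigroup in (contractive_semigroup S) in exact (hS : t)).

Lemma S_lin t : 0 <= t -> forall (a : R[i]) x y, S t (a *: x + y) = a *: S t x + S t y.
Proof. by case: hSu => h _ _ _ _; apply: h. Qed.

Lemma S0 x : S 0 x = x.
Proof. by case: hSu => _ h _ _ _; apply: h. Qed.

Lemma S_add s t : 0 <= s -> 0 <= t -> forall x, S (s + t) x = S s (S t x).
Proof. by case: hSu => _ _ h _ _; apply: h. Qed.

Lemma S_contr t x : 0 <= t -> nv (S t x) <= nv x.
Proof. by case: hSu => _ _ _ h _ t0; rewrite -lecR -!nvE; apply: h. Qed.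

Lemma S_zero t : 0 <= t -> S t 0 = 0.
Proof.
move=> t0; have := S_lin t0 1 0 0; rewrite !scale1r !addr0 => h.
have : S t 0 + 0 = S t 0 + S t 0 by rewrite addr0 -h.
by move/addrI => <-.
Qed.

Lemma S_D t x y : 0 <= t -> S t (x + y) = S t x + S t y.
Proof. by move=> t0; have := S_lin t0 1 x y; rewrite !scale1r. Qed.

Lemma S_Z t a x : 0 <= t -> S t (a *: x) = a *: S t x.
Proof. by move=> t0; have := S_lin t0 a x 0; rewrite !addr0 S_zero // addr0. Qed.

Lemma S_N t x : 0 <= t -> S t (- x) = - S t x.
Proof. by move=> t0; rewrite -scaleN1r S_Z // scaleN1r. Qed.

Lemma S_B t x y : 0 <= t -> S t (x - y) = S t x - S t y.
Proof. by move=> t0; rewrite S_D // S_N. Qed.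

Lemma S_cont_eps x (e : R) : 0 < e ->
  exists2 d : R, 0 < d & forall r, 0 <= r -> r < d -> nv (S r x - x) <= e.
Proof.
move=> e0; case: hSu => _ _ _ _ /(_ x) /cvgrPdist_le /(_ e%:C).
rewrite ltcR => /(_ e0) /near_rightP [d d0 hd]; exists d => // r.
rewrite le_eqVlt => /orP[/eqP <- _|r0 rd]; first by rewrite S0 subrr nv0 ltW.
by rewrite -lecR -nvE distrC; apply: hd.
Qed.

Definition gen (x z : V) := generator_graph S x z.

Definition dq (h : R) (x : V) := (h^-1)%:C *: (S h x - x).

Lemma gen_eps x z : gen x z -> forall e : R, 0 < e ->
  exists2 d : R, 0 < d & forall h, 0 < h -> h < d -> nv (dq h x - z) <= e.
Proof.
move=> g e e0; move/cvgrPdist_le: g => /(_ e%:C); rewrite ltcR => /(_ e0).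
move=> /near_rightP [d d0 hd]; exists d => // h h0 hd'.
by rewrite -lecR -nvE distrC; apply: hd.
Qed.

Lemma gen_intro x z : (forall e : R, 0 < e ->
  exists2 d : R, 0 < d & forall h, 0 < h -> h < d -> nv (dq h x - z) <= e) ->
  gen x z.
Proof.
move=> hg; apply/cvgrPdist_le => e /complex_pos [e0 ->].
have [d d0 hd] := hg _ e0; apply: near_rightI; exists d => // h h0 hd'.
by rewrite distrC nvE lecR; apply: hd.
Qed.

End Semigroup.


Section Gen.
Variable R : realType.
Variable V : completeNormedModType R[i].
Variable S : R -> V -> V.
Hypothesis hS : contractive_semigroup S.

Local Notation gen := (gen S).
Local Notation dq := (dq S).

Lemma nvZc (a : R[i]) (x : V) : nv (a *: x) = complex.Re `|a| * nv x.
Proof.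
apply: complexI; rewrite -nvE normrZ nvE rmorphM /=; congr (_ * _).
Qed.

Lemma na_ge0 (a : R[i]) : 0 <= complex.Re `|a|.
Proof. by have := normr_ge0 a; rewrite lecE => /andP[]. Qed.

Lemma dq_lin h a x y : 0 < h -> dq h (a *: x + y) = a *: dq h x + dq h y.
Proof.
move=> h0; rewrite /dq (S_lin hS (ltW h0)) scalerA mulrC -scalerA -scalerDr.
congr (_ *: _); by rewrite scalerBr opprD addrACA.
Qed.

Lemma gen_lin a x1 z1 x2 z2 : gen x1 z1 -> gen x2 z2 ->
  gen (a *: x1 + x2) (a *: z1 + z2).
Proof.
move=> g1 g2; apply: gen_intro => e e0.
set c := complex.Re `|a| + 1.
have c0 : 0 < c by rewrite /c; have := na_ge0 a; lra.
have e1 : 0 < e / (2 * c) by apply: divr_gt0 => //; lra.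
have e2 : 0 < e / 2 by lra.
have [d1 d10 h1] := gen_eps g1 e1.
have [d2 d20 h2] := gen_eps g2 e2.
exists (Num.min d1 d2); first by rewrite lt_min d10.
move=> h h0; rewrite lt_min => /andP[hd1 hd2].
rewrite dq_lin // opprD addrACA -scalerBr.
apply: (le_trans (nvD _ _)); rewrite nvZc.
have := h1 _ h0 hd1; have := h2 _ h0 hd2; have := na_ge0 a.
have := nv_ge0 (dq h x1 - z1).
move: (nv (dq h x1 - z1)) (nv (dq h x2 - z2)) => p q p0 a0 hq hp.
have : complex.Re `|a| * p <= c * (e / (2 * c)).
  by apply: ler_pM => //; rewrite /c; lra.
have -> : c * (e / (2 * c)) = e / 2.
  by field; rewrite gt_eqF.
lra.
Qed.

Lemma dq_S h s x : 0 < h -> 0 <= s -> dq h (S s x) = S s (dq h x).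
Proof.
move=> h0 s0; rewrite /dq (S_Z hS) // (S_B hS) //.
by rewrite -(S_add hS (ltW h0) s0) -(S_add hS s0 (ltW h0)) [h + s]addrC.
Qed.

Lemma gen_S s x z : 0 <= s -> gen x z -> gen (S s x) (S s z).
Proof.
move=> s0 g; apply: gen_intro => e e0.
have [d d0 hd] := gen_eps g e0; exists d => // h h0 hd'.
rewrite dq_S // -(S_B hS) //; apply: le_trans (S_contr hS _ _) _ => //.
exact: hd.
Qed.

Lemma dq_inv h x : 0 < h -> S h x = x + h%:C *: dq h x.
Proof.
move=> h0; rewrite /dq scalerA -rmorphM mulfV ?gt_eqF // rmorph1 scale1r.
by rewrite addrC subrK.
Qed.

Lemma dissip x z (mu : R) : gen x z -> 0 < mu ->
  mu * nv x <= nv (mu%:C *: x - z).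
Proof.
move=> g mu0; apply/ler_addgt0Pr => e e0.
have [d d0 hd] := gen_eps g e0.
pose h := d / 2.
have h0 : 0 < h by rewrite /h; lra.
have hd' : h < d by rewrite /h; lra.
have key : (1 + h * mu)%:C *: x =
  S h x + h%:C *: (mu%:C *: x - z) - h%:C *: (dq h x - z).
  rewrite dq_inv // rmorphD rmorph1 scalerDl scale1r rmorphM -scalerA.
  rewrite !scalerBr opprB -!addrA addKr [h%:C *: dq h x + _]addrCA subrr addr0 //.
have : (1 + h * mu) * nv x <= nv x + h * nv (mu%:C *: x - z) + h * e.
  have -> : (1 + h * mu) * nv x = nv ((1 + h * mu)%:C *: x).
    by rewrite nvZ ger0_norm //; apply: addr_ge0 => //; apply: mulr_ge0; lra.
  rewrite key; apply: (le_trans (nvD _ _)); rewrite nvN.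
  apply: lerD; first apply: (le_trans (nvD _ _)).
    apply: lerD; first by apply: (S_contr hS); lra.
    by rewrite nvZ ger0_norm // ltW.
  rewrite nvZ ger0_norm; last lra.
  by apply: ler_wpM2l; [lra | apply: hd].
have := nv_ge0 x; move: (nv x) (nv (mu%:C *: x - z)) => a N a0 H.
nra.
Qed.

Lemma gen_unique x z : gen x z -> gen x z -> True.
Proof. by []. Qed.

End Gen.


Section Seq.
Variable R : realType.
Variable V : completeNormedModType R[i].

Definition convs (u : nat -> V) (l : V) :=
  forall e : R, 0 < e -> exists N, forall n, (N <= n)%N -> nv (u n - l) <= e.

Lemma cauchy_conv (u : nat -> V) :
  (forall e : R, 0 < e -> exists N, forall m n, (N <= n)%N -> (n <= m)%N ->
     nv (u m - u n) <= e) -> exists l, convs u l.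
Proof.
move=> hc.
have cu : cvg (u @ \oo).
  apply/cauchy_cvgP/cauchy_ballP => e /complex_pos [e0 ee].
  have e2 : 0 < complex.Re e / 2 by lra.
  have [N hN] := hc _ e2.
  near_simpl.
  exists ([set n | (N <= n)%N], [set n | (N <= n)%N]).
    by split; exists N.
  move=> [m n] [/= hm hn]; rewrite -ball_normE /= nvE ee ltcR.
  case: (leqP m n) => hmn.
    rewrite nvB; apply: (le_lt_trans (hN _ _ hm hmn)); lra.
  apply: (le_lt_trans (hN _ _ hn (ltnW hmn))); lra.
exists (lim (u @ \oo)) => e e0.
move/cvgrPdist_le: cu => /(_ e%:C); rewrite ltcR => /(_ e0) [N _ hN].
exists N => n hn; rewrite nvB -lecR -nvE; exact: hN.
Qed.

Lemma conv_closed (K : set V) (u : nat -> V) l :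
  closed K -> (forall n, K (u n)) -> convs u l -> K l.
Proof.
move=> cK Ku cl; apply: cK; apply: closure_eps => e e0.
have [N hN] := cl e e0; exists (u N); split => //; rewrite nvB; exact: hN.
Qed.

Lemma conv_unique (u : nat -> V) l l' : convs u l -> convs u l' -> l = l'.
Proof.
move=> c1 c2; apply/eqP; rewrite -subr_eq0; apply/eqP/nv_eq0.
apply/ler_addgt0Pr => e e0; rewrite add0r.
have e2 : 0 < e / 2 by lra.
have [N1 h1] := c1 _ e2; have [N2 h2] := c2 _ e2.
have := h1 (maxn N1 N2) (leq_maxl _ _); have := h2 (maxn N1 N2) (leq_maxr _ _).
have : l - l' = (u (maxn N1 N2) - l') - (u (maxn N1 N2) - l).
  by rewrite opprB [in RHS]addrC addrA subrK.
move=> ->; move=> a b; apply: (le_trans (nvD _ _)); rewrite nvN; lra.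
Qed.

Lemma pow_small (q : R) : 0 <= q < 1 -> forall e : R, 0 < e ->
  exists N, forall n, (N <= n)%N -> q ^+ n <= e.
Proof.
move=> /andP[q0 q1] e e0.
have : `|q| < 1 by rewrite ger0_norm.
move/cvg_expr/cvgrPdist_le => /(_ e e0) [N _ hN]; exists N => n hn.
have := hN n hn; rewrite /= sub0r normrN ger0_norm //; exact: exprn_ge0.
Qed.

Lemma geo_conv (u : nat -> V) (C q : R) : 0 <= q < 1 ->
  (forall n, nv (u n.+1 - u n) <= C * q ^+ n) -> exists l, convs u l.
Proof.
move=> /andP[q0 q1] hu; apply: cauchy_conv => e e0.
have C0 : 0 <= C.
  have := hu 0%N; rewrite expr0 mulr1 => h; exact: le_trans (nv_ge0 _) h.
have q1' : 0 < 1 - q by lra.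
have key : forall n k, nv (u (n + k)%N - u n) <= C * q ^+ n / (1 - q).
  move=> n; elim => [|k ih]; first rewrite addn0 subrr nv0.
    by apply: divr_ge0; [apply: mulr_ge0 => //; exact: exprn_ge0 | lra].
  have : nv (u (n + k.+1)%N - u n) <= C * q ^+ n * (1 - q ^+ k.+1) / (1 - q).
    elim: k {ih} => [|k ih].
      rewrite addn1 expr1 mulfK ?gt_eqF //.
    have -> : u (n + k.+2)%N - u n = (u (n + k.+1).+1 - u (n + k.+1)%N) +
       (u (n + k.+1)%N - u n) by rewrite addnS addrA subrK.
    apply: (le_trans (nvD _ _)); apply: (le_trans (lerD (hu _) ih)).
    rewrite exprD.
    have -> : C * (q ^+ n * q ^+ k.+1) = C * q ^+ n * (1 - q ^+ k.+2) / (1 - q)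
        - C * q ^+ n * (1 - q ^+ k.+1) / (1 - q).
      by rewrite !exprS; field; rewrite gt_eqF.
    lra.
  move=> h; apply: (le_trans h); rewrite ler_pM2r ?invr_gt0 //.
  have := exprn_ge0 k.+1 q0; have : 0 <= C * q ^+ n.
    by apply: mulr_ge0 => //; exact: exprn_ge0.
  move: (C * q ^+ n) (q ^+ k.+1) => p r; nra.
have hq : 0 <= q < 1 by rewrite q0 q1.
have he : 0 < e * (1 - q) / (C + 1).
  apply: divr_gt0; last lra; exact: mulr_gt0.
have [N hN] := pow_small hq he.
exists N => m n hn hnm; rewrite -(subnKC hnm).
  apply: (le_trans (key _ _)).
  rewrite ler_pdivrMr //.
  have := hN n hn; have := exprn_ge0 n q0; move: (q ^+ n) => p p0 hp.
  have : C * p <= (C + 1) * (e * (1 - q) / (C + 1)).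
    by apply: ler_pM => //; lra.
  have -> : (C + 1) * (e * (1 - q) / (C + 1)) = e * (1 - q).
    by field; rewrite gt_eqF //; lra.
  by [].
Qed.

End Seq.


Section Sub.
Variable R : realType.
Variable V : completeNormedModType R[i].
Variable K : set V.
Hypothesis hK : closed_subspace K.

Lemma K_closed : closed K. Proof. by case: hK. Qed.
Lemma K0 : K 0. Proof. by case: hK. Qed.
Lemma K_lin a x y : K x -> K y -> K (a *: x + y). Proof. by case: hK => _ _ h; apply: h. Qed.
Lemma KD x y : K x -> K y -> K (x + y).
Proof. by move=> kx ky; have := K_lin 1 kx ky; rewrite scale1r. Qed.
Lemma KZ a x : K x -> K (a *: x).
Proof. by move=> kx; have := K_lin a kx K0; rewrite addr0. Qed.
Lemma KN x : K x -> K (- x).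
Proof. by move=> kx; rewrite -scaleN1r; apply: KZ. Qed.
Lemma KB x y : K x -> K y -> K (x - y).
Proof. by move=> kx ky; apply: KD => //; apply: KN. Qed.
Lemma K_sum N (c : nat -> R[i]) (v : nat -> V) : (forall k, K (v k)) ->
  K (\sum_(k < N) c k *: v k).
Proof.
move=> kv; elim: N => [|N ih]; first by rewrite big_ord0; exact: K0.
by rewrite big_ord_recr /=; apply: KD => //; apply: KZ.
Qed.
End Sub.

Section SumBound.
Variable R : realType.
Variable V : completeNormedModType R[i].

Lemma nv_sum N (c : nat -> R) (v : nat -> V) (B : nat -> R) :
  (forall k, 0 <= c k) -> (forall k, nv (v k) <= B k) ->
  nv (\sum_(k < N) (c k)%:C *: v k) <= \sum_(k < N) c k * B k.
Proof.
move=> c0 hB; elim: N => [|N ih]; first by rewrite !big_ord0 nv0.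
rewrite !big_ord_recr /=; apply: (le_trans (nvD _ _)); apply: lerD => //.
by rewrite nvZ ger0_norm //; apply: ler_wpM2l.
Qed.

End SumBound.

Section Res.
Variable R : realType.
Variable V : completeNormedModType R[i].
Variable S : R -> V -> V.
Hypothesis hS : contractive_semigroup S.

Local Notation gen := (gen S).
Local Notation dq := (dq S).

Definition Res (mu : R) (y x : V) := gen x (mu%:C *: x - y).

Lemma res_lin mu a y1 x1 y2 x2 : Res mu y1 x1 -> Res mu y2 x2 ->
  Res mu (a *: y1 + y2) (a *: x1 + x2).
Proof.
move=> r1 r2; have := gen_lin hS (a:=a) r1 r2; rewrite /Res.
congr gen; rewrite !scalerBr scalerDr !scalerA mulrC opprD addrACA.
by rewrite -addrA.
Qed.

Lemma res_uniq mu y x x' : 0 < mu -> Res mu y x -> Res mu y x' -> x = x'.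
Proof.
move=> mu0 r1 r2; have := res_lin (a:=-1) r1 r2.
rewrite !scaleN1r addNr /Res subr0 => g.
have := dissip hS g mu0; rewrite subrr nv0 => h.
apply/eqP; rewrite eq_sym -subr_eq0 addrC; apply/eqP/nv_eq0.
by rewrite -(pmulr_rle0 _ mu0).
Qed.

Lemma res_bound mu y x : 0 < mu -> Res mu y x -> mu * nv x <= nv y.
Proof.
by move=> mu0 r; have := dissip hS r mu0; rewrite opprB addrC subrK.
Qed.

Lemma res_S mu y x s : 0 <= s -> Res mu y x -> Res mu (S s y) (S s x).
Proof.
move=> s0 r; have := gen_S hS s0 r; rewrite /Res (S_B hS) // (S_Z hS) //.
Qed.

End Res.


Section Geo.
Variable R : realType.
Lemma geo_sum (h mu : R) N : 0 < h -> 0 < mu ->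
  \sum_(k < N) ((1 + h * mu)^-1) ^+ k.+1 * h * mu = 1 - ((1 + h * mu)^-1) ^+ N.
Proof.
move=> h0 mu0; set a := (1 + h * mu)^-1.
have ah : a * (h * mu) = 1 - a.
  by rewrite /a; field; apply: lt0r_neq0; rewrite addr_gt0 // mulr_gt0.
elim: N => [|N ih]; first by rewrite big_ord0 expr0 subrr.
rewrite big_ord_recr /= ih.
have -> : a ^+ N.+1 * h * mu = a ^+ N * (a * (h * mu)) by rewrite exprSr; ring.
by rewrite ah exprSr; ring.
Qed.

Lemma geo_sumk (a : R) N : a != 1 ->
  \sum_(k < N) k%:R * a ^+ k * (1 - a) = (a - a ^+ N.+1) / (1 - a) - N%:R * a ^+ N.
Proof.
move=> a1; have a1' : 1 - a != 0 by rewrite subr_eq0 eq_sym.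
elim: N => [|N ih].
  by rewrite big_ord0 expr1 subrr mul0r mul0r subr0.
rewrite big_ord_recr /= ih !exprS -natr1.
by field.
Qed.
End Geo.

Lemma zm_a (W : zmodType) (p q w : W) : p + q + (w - q) = p + w.
Proof. by rewrite -addrA [q + _]addrC subrK. Qed.

Section DI.
Variable R : realType.
Variable V : completeNormedModType R[i].
Variable S : R -> V -> V.
Hypothesis hS : contractive_semigroup S.

Local Notation gen := (gen S).
Local Notation dq := (dq S).
Local Notation Res := (Res S).

Variables (mu h : R) (y0 x : V).
Hypotheses (mu0 : 0 < mu) (h0 : 0 < h) (r : Res mu y0 x).

Let a := (1 + h * mu)^-1.
Let e := dq h x - (mu%:C *: x - y0).

Lemma a_pos : 0 < a.
Proof. by rewrite /a invr_gt0 addr_gt0 // mulr_gt0. Qed.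

Lemma a_lt1 : a < 1.
Proof. by rewrite /a invf_lt1 ?addr_gt0 ?mulr_gt0 // ltrDl mulr_gt0. Qed.

Lemma step_id : x = a%:C *: (S h x + h%:C *: (y0 - e)).
Proof.
have -> : y0 - e = mu%:C *: x - dq h x.
  by rewrite /e opprB addrA [y0 + _]addrC subrK.
rewrite (@dq_inv _ _ S h x h0) scalerBr zm_a scalerA -rmorphM.
have -> : x + (h * mu)%:C *: x = (1 + h * mu)%:C *: x.
  by rewrite rmorphD rmorph1 scalerDl scale1r.
rewrite scalerA -rmorphM.
by rewrite /a mulVf ?rmorph1 ?scale1r // lt0r_neq0 // addr_gt0 // mulr_gt0.
Qed.

Lemma DI N : x = (a ^+ N)%:C *: S (N%:R * h) x +
  \sum_(k < N) (a ^+ k.+1 * h)%:C *: S (k%:R * h) (y0 - e).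
Proof.
elim: N => [|N ih]; first by rewrite big_ord0 expr0 mul0r S0 // rmorph1 scale1r addr0.
rewrite big_ord_recr /= {1}ih.
have hN : 0 <= N%:R * h by apply: mulr_ge0 => //; exact: ltW.
have -> : S (N%:R * h) x =
    a%:C *: (S (N.+1%:R * h) x + h%:C *: S (N%:R * h) (y0 - e)).
  rewrite {1}step_id (S_Z hS) // (S_D hS) // (S_Z hS) //.
  by rewrite -(S_add hS hN (ltW h0)) -natr1 mulrDl mul1r.
rewrite !scalerDr !scalerA -!rmorphM -!exprSr -addrA; congr (_ + _).
by rewrite addrC.
Qed.

Lemma DI_bound N :
  nv (x - \sum_(k < N) (a ^+ k.+1 * h)%:C *: S (k%:R * h) y0) <=
  a ^+ N * nv x + (1 - a ^+ N) / mu * nv e.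
Proof.
have -> : x - \sum_(k < N) (a ^+ k.+1 * h)%:C *: S (k%:R * h) y0 =
    (a ^+ N)%:C *: S (N%:R * h) x - \sum_(k < N) (a ^+ k.+1 * h)%:C *: S (k%:R * h) e.
  rewrite {1}(DI N) -addrA; congr (_ + _).
  rewrite -sumrN -big_split /= -sumrN; apply: eq_bigr => k _.
  rewrite (S_B hS); last by apply: mulr_ge0; [exact: ler0n | exact: (ltW h0)].
  by rewrite scalerBr addrAC subrr add0r.
have hc : forall k, 0 <= a ^+ k.+1 * h.
  by move=> k; apply: mulr_ge0; [apply: exprn_ge0; exact: (ltW a_pos) | exact: (ltW h0)].
apply: (le_trans (nvD _ _)); rewrite nvN; apply: lerD.
  rewrite nvZ ger0_norm; last by apply: exprn_ge0; exact: (ltW a_pos).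
  apply: ler_wpM2l; first by apply: exprn_ge0; exact: (ltW a_pos).
  by apply: S_contr => //; apply: mulr_ge0; [exact: ler0n | exact: (ltW h0)].
apply: (le_trans (@nv_sum R V N (fun k => a ^+ k.+1 * h)
  (fun k => S (k%:R * h) e) (fun _ => nv e) hc _)).
  by move=> k /=; apply: S_contr => //; apply: mulr_ge0; [exact: ler0n | exact: (ltW h0)].
rewrite -mulr_suml; apply: ler_wpM2r; first exact: nv_ge0.
have := geo_sum N h0 mu0; rewrite -/a -mulr_suml => <-.
by rewrite mulfK // gt_eqF.
Qed.

End DI.


Section LemA.
Variable R : realType.
Variable V : completeNormedModType R[i].
Variable S : R -> V -> V.
Hypothesis hS : contractive_semigroup S.

Local Notation gen := (gen S).
Local Notation dq := (dq S).
Local Notation Res := (Res S).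

Lemma resK (K : set V) : closed_subspace K ->
  (forall t, 0 <= t -> forall v, K v -> K (S t v)) ->
  forall mu y0 x, 0 < mu -> K y0 -> Res mu y0 x -> K x.
Proof.
move=> hK KS mu y0 x mu0 Ky0 r.
apply: (K_closed hK); apply: closure_eps => eps eps0.
have em : 0 < eps * mu / 2 by apply: divr_gt0 => //; exact: mulr_gt0.
have [d d0 hd] := gen_eps r em.
pose h := d / 2.
have h0 : 0 < h by rewrite /h; lra.
have hq := hd h h0 (_ : h < d); rewrite /h in hq; have {hq} hq := hq (ltac:(lra)).
pose a := (1 + h * mu)^-1.
have a0 : 0 < a := a_pos mu0 h0.
have a1 : a < 1 := a_lt1 mu0 h0.
have ex : 0 < eps / (2 * (nv x + 1)).
  by apply: divr_gt0 => //; have := nv_ge0 x; lra.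
have [N hN] := pow_small (q := a) (ltac:(apply/andP; split; lra)) ex.
exists (\sum_(k < N) (a ^+ k.+1 * h)%:C *: S (k%:R * h) y0); split.
  apply: (@K_sum R V K hK N (fun k => (a ^+ k.+1 * h)%:C)
    (fun k => S (k%:R * h) y0)) => k; apply: KS => //.
  by apply: mulr_ge0; [exact: ler0n | exact: ltW].
apply: (le_trans (DI_bound hS y0 x mu0 h0 N)); rewrite -/a.
have := hN N (leqnn N); have := exprn_ge0 N (ltW a0); have := exprn_ile1 N (ltW a0) (ltW a1).
move: (a ^+ N) => p p1 p0 hp.
have hp' : p * (2 * (nv x + 1)) <= eps.
  by rewrite -ler_pdivlMr //; have := nv_ge0 x; lra.
set ne := nv _ in hq *.
have hne : ne / mu <= eps / 2.
  by rewrite ler_pdivrMr //; move: hq; rewrite mulrAC.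
have -> : (1 - p) / mu * ne = (1 - p) * (ne / mu) by rewrite mulrAC mulrA.
have := nv_ge0 x; have : 0 <= ne / mu by apply: divr_ge0; [exact: nv_ge0 | exact: ltW].
move: (ne / mu) hne => q hq' q0 nx0.
have := mulr_ge0 p0 q0.
have : p * (2 * (nv x + 1)) = 2 * (p * nv x) + 2 * p by ring.
rewrite mulrBl mul1r; lra.
Qed.

End LemA.


Section Approx.
Variable R : realType.
Variable V : completeNormedModType R[i].
Variable S : R -> V -> V.
Hypothesis hS : contractive_semigroup S.

Local Notation gen := (gen S).
Local Notation dq := (dq S).
Local Notation Res := (Res S).

Lemma Y_minus_w (lam h a : R) (w : V) N :
  \sum_(k < N) a ^+ k.+1 * h * lam = 1 - a ^+ N ->
  (forall k, 0 <= k%:R * h) ->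
  \sum_(k < N) (a ^+ k.+1 * h)%:C *: S (k%:R * h) (lam%:C *: w) - w =
  \sum_(k < N) (a ^+ k.+1 * h * lam)%:C *: (S (k%:R * h) w - w) - (a ^+ N)%:C *: w.
Proof.
move=> hg hk.
have -> : \sum_(k < N) (a ^+ k.+1 * h * lam)%:C *: (S (k%:R * h) w - w) =
   \sum_(k < N) (a ^+ k.+1 * h)%:C *: S (k%:R * h) (lam%:C *: w) -
   (\sum_(k < N) a ^+ k.+1 * h * lam)%:C *: w.
  rewrite rmorph_sum scaler_suml -sumrB; apply: eq_bigr => k _.
  by rewrite scalerBr (S_Z hS) // scalerA -rmorphM.
rewrite hg rmorphB rmorph1 scalerBl scale1r opprB.
by rewrite -addrA; congr (_ + _); rewrite addrAC subrr add0r.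
Qed.

Lemma approxF (w : V) (eps : R) : 0 < eps ->
  exists2 L : R, 0 < L & forall lam x, L <= lam ->
    Res lam (lam%:C *: w) x -> nv (x - w) <= eps.
Proof.
move=> eps0.
have e4 : 0 < eps / 4 by lra.
have [tau tau0 htau] := S_cont_eps hS w e4.
set W := nv w.
have W0 : 0 <= W := nv_ge0 w.
exists (8 * (W + 1) / (tau * eps) + 1).
  have : 0 <= 8 * (W + 1) / (tau * eps).
    by apply: divr_ge0; [lra | apply: mulr_ge0; lra].
  lra.
move=> lam x hL r.
have hlt : 0 <= 8 * (W + 1) / (tau * eps).
  by apply: divr_ge0; [lra | apply: mulr_ge0; lra].
have lam0 : 0 < lam by lra.
have hlamb : 2 * W / (tau * lam) <= eps / 4.
  rewrite ler_pdivrMr; last exact: mulr_gt0.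
  have : 8 * (W + 1) <= lam * (tau * eps).
    by rewrite -ler_pdivrMr ?mulr_gt0 //; lra.
  nra.
have nx : nv x <= W.
  have := res_bound hS lam0 r; rewrite nvZ ger0_norm; last exact: ltW.
  by rewrite ler_pM2l.
have le4 : 0 < lam * eps / 4 by apply: divr_gt0; [exact: mulr_gt0 | lra].
have [d d0 hd] := gen_eps r le4.
pose h := d / 2.
have h0 : 0 < h by rewrite /h; lra.
have hq := hd h h0 (ltac:(rewrite /h; lra)).
pose a := (1 + h * lam)^-1.
have a0 : 0 < a := a_pos lam0 h0.
have a1 : a < 1 := a_lt1 lam0 h0.
have ah : a * (h * lam) = 1 - a.
  by rewrite /a; field; apply: lt0r_neq0; rewrite addr_gt0 // mulr_gt0.
have ex : 0 < eps / (4 * (2 * W + 1)) by apply: divr_gt0; lra.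
have [N hN] := pow_small (q := a) (ltac:(apply/andP; split; lra)) ex.
have hk : forall k : nat, 0 <= k%:R * h by move=> k; apply: mulr_ge0; [exact: ler0n | lra].
have hg := geo_sum N h0 lam0; rewrite -/a in hg.
set Y := \sum_(k < N) _ in hg.
pose Yv := \sum_(k < N) (a ^+ k.+1 * h)%:C *: S (k%:R * h) (lam%:C *: w).
have D1 := DI_bound hS (lam%:C *: w) x lam0 h0 N; rewrite -/a -/Yv in D1.
have D2 := @Y_minus_w lam h a w N hg hk; rewrite -/Yv in D2.
have fk : forall k : nat, nv (S (k%:R * h) w - w) <= eps / 4 + 2 * W * (k%:R * h) / tau.
  move=> k.
  have q0 : 0 <= 2 * W * (k%:R * h) / tau.
    by apply: divr_ge0; [apply: mulr_ge0; [lra | exact: hk] | lra].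
  case: (ltP (k%:R * h) tau) => hkt.
    by apply: (le_trans (htau _ (hk k) hkt)); lra.
  apply: (le_trans (nvD _ _)); rewrite nvN.
  have := S_contr hS w (hk k); rewrite -/W => hs.
  have : 2 * W <= 2 * W * (k%:R * h) / tau.
    rewrite ler_pdivlMr //; apply: ler_wpM2l => //; lra.
  have := nv_ge0 (S (k%:R * h) w); lra.
have hc : forall k : nat, 0 <= a ^+ k.+1 * h * lam.
  by move=> k; apply: mulr_ge0; [apply: mulr_ge0; [apply: exprn_ge0; lra | lra] | lra].
have NS := @nv_sum R V N (fun k => a ^+ k.+1 * h * lam)
  (fun k => S (k%:R * h) w - w) (fun k : nat => eps / 4 + 2 * W * (k%:R * h) / tau) hc fk.
have s1 : \sum_(k < N) a ^+ k.+1 * h * lam * (eps / 4 + 2 * W * (k%:R * h) / tau) =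
    eps / 4 * (1 - a ^+ N) + 2 * W * h / tau * \sum_(k < N) k%:R * a ^+ k * (1 - a).
  rewrite -hg mulr_sumr mulr_sumr -big_split; apply: eq_bigr => k _ /=.
  rewrite -ah exprS; field; lra.
have s2 : \sum_(k < N) k%:R * a ^+ k * (1 - a) <= 1 / (h * lam).
  rewrite geo_sumk; last by rewrite lt_eqF.
  have -> : 1 / (h * lam) = a / (1 - a).
    by rewrite -ah; field; rewrite !lt0r_neq0.
  have : 0 <= N%:R * a ^+ N by apply: mulr_ge0; [exact: ler0n | apply: exprn_ge0; lra].
  have : (a - a ^+ N.+1) / (1 - a) <= a / (1 - a).
    rewrite ler_pM2r ?invr_gt0; last lra.
    have := exprn_ge0 N.+1 (ltW a0); lra.
  lra.
have s3 : 2 * W * h / tau * \sum_(k < N) k%:R * a ^+ k * (1 - a) <= 2 * W / (tau * lam).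
  apply: (le_trans (ler_wpM2l _ s2)).
    by apply: divr_ge0; [apply: mulr_ge0; lra | lra].
  rewrite le_eqVlt; apply/orP; left; apply/eqP; field.
  by apply/and3P; split; apply: lt0r_neq0.
rewrite s1 in NS.
have hxw : x - w = (x - Yv) + (Yv - w) by rewrite addrA subrK.
rewrite hxw; apply: (le_trans (nvD _ _)).
apply: (le_trans (lerD D1 (le_refl _))).
rewrite D2; apply: (le_trans (lerD (le_refl _) (nvD _ _))); rewrite nvN nvZ ger0_norm;
  last by apply: exprn_ge0; lra.
rewrite -/W.
have := hN N (leqnn N); have := exprn_ge0 N (ltW a0); have := exprn_ile1 N (ltW a0) (ltW a1).
move: NS s3; move: (\sum_(k < N) _) => Z.
move: (a ^+ N) => p NS s3 p1 p0 hp.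
set ne := nv (dq h x - _) in hq *.
have hne : ne / lam <= eps / 4.
  by rewrite ler_pdivrMr //; move: hq; rewrite [lam * eps]mulrC mulrAC.
have -> : (1 - p) / lam * ne = (1 - p) * (ne / lam) by rewrite mulrAC mulrA.
have : 0 <= ne / lam by apply: divr_ge0; [exact: nv_ge0 | lra].
move: (ne / lam) hne => q hq' q0.
have hp' : p * (4 * (2 * W + 1)) <= eps by rewrite -ler_pdivlMr //; lra.
have := mulr_ge0 p0 q0.
have := mulr_ge0 p0 (nv_ge0 x).
have : p * nv x <= p * W by apply: ler_wpM2l.
have : p * (4 * (2 * W + 1)) = 8 * (p * W) + 4 * p by ring.
have : 0 <= eps / 4 * p by apply: mulr_ge0; lra.
idtac.
lra.
Qed.

End Approx.


Section Exp.
Variable R : realType.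
Variable V : completeNormedModType R[i].
Variable S : R -> V -> V.
Hypothesis hS : contractive_semigroup S.

Local Notation gen := (gen S).
Local Notation dq := (dq S).
Local Notation Res := (Res S).

Lemma gen0 : gen 0 0.
Proof.
apply: gen_intro => e e0; exists 1 => // h h0 _.
by rewrite /dq (S_zero hS (ltW h0)) subrr scaler0 subrr nv0 ltW.
Qed.

Lemma gen_scale a x z : gen x z -> gen (a *: x) (a *: z).
Proof. by move=> g; have := gen_lin hS (a:=a) g gen0; rewrite !addr0. Qed.

Lemma gen_sub x1 z1 x2 z2 : gen x1 z1 -> gen x2 z2 -> gen (x1 - x2) (z1 - z2).
Proof.
move=> g1 g2; have := gen_lin hS (a:=-1) g2 g1; rewrite !scaleN1r.
by rewrite [- x2 + _]addrC [- z2 + _]addrC.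
Qed.

Lemma res_sub mu y1 x1 y2 x2 : Res mu y1 x1 -> Res mu y2 x2 ->
  Res mu (y1 - y2) (x1 - x2).
Proof.
move=> r1 r2; have := res_lin hS (a:=-1) r2 r1; rewrite !scaleN1r.
by rewrite [- x2 + _]addrC [- y2 + _]addrC.
Qed.

Lemma one_step_err (s : R) (v av b x1 : V) : 0 < s -> gen v av -> gen av b ->
  Res (s^-1) (s^-1%:C *: v) x1 ->
  nv (x1 - S s v) <= s ^+ 2 * nv b + s * nv (dq s v - av).
Proof.
move=> s0 g1 g2 r.
have mu0 : 0 < s^-1 by rewrite invr_gt0.
have r1 : Res (s^-1) av (x1 - v).
  have := gen_sub r g1; rewrite /Res; congr gen.
  by rewrite scalerBr.
have r2 : Res (s^-1) (av - s%:C *: b) (s%:C *: av).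
  have := gen_scale (a:=s%:C) g2; rewrite /Res; congr gen.
  rewrite scalerA -rmorphM mulVf ?gt_eqF // rmorph1 scale1r.
  by rewrite opprB addrC subrK.
have r3 := res_sub r1 r2; rewrite opprB addrC subrK in r3.
have b3 := res_bound hS mu0 r3; rewrite nvZ ger0_norm in b3; last exact: ltW.
have hb : nv (x1 - v - s%:C *: av) <= s ^+ 2 * nv b.
  have := ler_wpM2l (ltW s0) b3; by rewrite mulrA mulfV ?gt_eqF // mul1r expr2 mulrA.
have -> : x1 - S s v = (x1 - v - s%:C *: av) - s%:C *: (dq s v - av).
  rewrite (@dq_inv _ _ S s v s0) scalerBr opprB.
  by rewrite [in RHS]addrA subrK opprD addrA.
apply: (le_trans (nvD _ _)); rewrite nvN nvZ ger0_norm; last exact: ltW.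
by apply: lerD.
Qed.

End Exp.


Section ExpK.
Variable R : realType.
Variable V : completeNormedModType R[i].
Variable S : R -> V -> V.
Hypothesis hS : contractive_semigroup S.

Local Notation gen := (gen S).
Local Notation dq := (dq S).
Local Notation Res := (Res S).

Lemma iter_err (K : set V) (s : R) (v x1 : V) (err : R) :
  closed_subspace K -> 0 < s ->
  (forall y, K y -> exists x, K x /\ Res (s^-1) (s^-1%:C *: y) x) ->
  K v -> Res (s^-1) (s^-1%:C *: v) x1 -> nv (x1 - S s v) <= err ->
  forall k : nat, exists q, K q /\ nv (q - S (k%:R * s) v) <= k%:R * err.
Proof.
move=> hK s0 hres Kv r1 herr; elim => [|k [q [Kq hq]]].
  by exists v; rewrite mul0r S0 // subrr nv0 mul0r.
have mu0 : 0 < s^-1 by rewrite invr_gt0.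
have ks : 0 <= k%:R * s by apply: mulr_ge0; [exact: ler0n | exact: ltW].
have [q' [Kq' rq']] := hres q Kq.
exists q'; split => //.
have rS := res_S hS ks r1; rewrite (S_Z hS) // in rS.
have r3 := res_sub hS rq' rS; rewrite -scalerBr in r3.
have b3 := res_bound hS mu0 r3; rewrite nvZ ger0_norm ?(ltW mu0) // ler_pM2l // in b3.
have -> : S (k.+1%:R * s) v = S (k%:R * s) (S s v).
  by rewrite -(S_add hS ks (ltW s0)) -natr1 mulrDl mul1r.
have -> : q' - S (k%:R * s) (S s v) =
   (q' - S (k%:R * s) x1) + S (k%:R * s) (x1 - S s v).
  by rewrite (S_B hS) // addrA subrK.
apply: (le_trans (nvD _ _)); rewrite -natr1 mulrDl mul1r.
apply: lerD; first exact: le_trans b3 hq.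
by apply: le_trans herr; apply: (S_contr hS).
Qed.

Lemma expK (K : set V) : closed_subspace K ->
  (forall mu, 0 < mu -> forall y, K y -> exists x, K x /\ Res mu y x) ->
  forall t, 0 <= t -> forall v, K v -> K (S t v).
Proof.
move=> hK hres t; rewrite le_eqVlt => /orP[/eqP <- v Kv|t0 v Kv].
  by rewrite S0.
apply: (K_closed hK); apply: closure_eps => eps eps0.
have e6 : 0 < eps / 6 by lra.
have [L L0 hL] := approxF hS v e6.
have [p [Kp rp]] := hres L L0 (L%:C *: v) (KZ hK _ Kv).
have [v' [Kv' rv']] := hres L L0 (L%:C *: p) (KZ hK _ Kp).
have hp : nv (p - v) <= eps / 6 := hL L p (le_refl _) rp.
have hv'p : nv (v' - p) <= nv (p - v).
  have r3 := res_sub hS rv' rp; rewrite -scalerBr in r3.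
  have := res_bound hS L0 r3; rewrite nvZ ger0_norm ?ler_pM2l //; exact: ltW.
pose av := L%:C *: v' - L%:C *: p.
have g1 : gen v' av by exact: rv'.
pose b := L%:C *: (L%:C *: v' - L%:C *: p) - L%:C *: (L%:C *: p - L%:C *: v).
have g2 : gen av b := gen_sub hS (gen_scale hS (a:=L%:C) rv') (gen_scale hS (a:=L%:C) rp).
set B := nv b.
have B0 : 0 <= B := nv_ge0 b.
have et : 0 < eps / (6 * t) by apply: divr_gt0 => //; lra.
have [d d0 hd] := gen_eps g1 et.
pose m := Num.min (d / 2) (eps / (6 * t * (B + 1))).
have m0 : 0 < m.
  by rewrite lt_min; apply/andP; split; [lra | apply: divr_gt0 => //; nra].
have [N0 _ hN0] := nbhs_infty_ger (t / m).
set N := N0.+1.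
have hN : t / m <= N%:R.
  by apply: (le_trans (hN0 N0 (leqnn _))); rewrite ler_nat.
have tm : 0 < t / m by exact: divr_gt0.
have Npos : 0 < N%:R :> R by lra.
pose s := t / N%:R.
have s0 : 0 < s by exact: divr_gt0.
have sm : s <= m.
  by rewrite /s ler_pdivrMr // mulrC -ler_pdivrMr.
have sd : s < d.
  by apply: (le_lt_trans sm); rewrite /m gt_min; apply/orP; left; lra.
have sB : t * s * B <= eps / 6.
  have : s <= eps / (6 * t * (B + 1)).
    by apply: (le_trans sm); rewrite /m ge_min lexx orbT.
  rewrite ler_pdivlMr; last by nra.
  nra.
have hne := hd s s0 sd.
set ne := nv (dq s v' - av) in hne.
have ne0 : 0 <= ne := nv_ge0 _.
have hres' : forall y, K y -> exists x, K x /\ Res (s^-1) (s^-1%:C *: y) x.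
  by move=> y Ky; apply: hres; [rewrite invr_gt0 | exact: KZ].
have [x1 [Kx1 rx1]] := hres' v' Kv'.
have herr := one_step_err hS s0 g1 g2 rx1.
have [q [Kq hq]] := iter_err hK s0 hres' Kv' rx1 herr N.
exists q; split => //.
have Ns : N%:R * s = t by rewrite /s mulrC mulfVK // gt_eqF.
rewrite Ns in hq.
have -> : S t v - q = S t (v - v') + (S t v' - q) by rewrite (S_B hS) ?ltW // addrA subrK.
apply: (le_trans (nvD _ _)).
have h1 : nv (S t (v - v')) <= eps / 3.
  apply: (le_trans (S_contr hS _ (ltW t0))).
  have -> : v - v' = - ((v' - p) + (p - v)) by rewrite addrA subrK opprB.
  rewrite nvN; apply: (le_trans (nvD _ _)); lra.
have h2 : nv (S t v' - q) <= eps / 3.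
  rewrite nvB; apply: (le_trans hq).
  have -> : N%:R * (s ^+ 2 * B + s * ne) = t * s * B + t * ne.
    by rewrite -Ns; ring.
  have : t * ne <= eps / 6.
    by move: hne; rewrite ler_pdivlMr ?mulr_gt0 //; lra.
  lra.
lra.
Qed.

End ExpK.


Section Chain.
Variable R : realType.
Variable V : completeNormedModType R[i].
Variable S : R -> V -> V.
Hypothesis hS : contractive_semigroup S.

Local Notation gen := (gen S).
Local Notation dq := (dq S).
Local Notation Res := (Res S).

Variable K : set V.
Hypothesis hK : closed_subspace K.

Definition resP (mu : R) := forall y, K y -> exists x, K x /\ Res mu y x.

Lemma chain_step mu0 mu : 0 < mu0 -> resP mu0 -> 0 < mu -> mu < 2 * mu0 -> resP mu.
Proof.
move=> mu00 P0 mu_0 mu2 y Ky.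
have [R0 hR0] : exists R0 : V -> V, forall w, K w -> K (R0 w) /\ Res mu0 w (R0 w).
  have [f hf] := choice (P := fun w x => K w -> K x /\ Res mu0 w x) (fun w =>
    match pselect (K w) with
    | left Kw => let: ex_intro x hx := P0 w Kw in ex_intro _ x (fun _ => hx)
    | right nKw => ex_intro _ 0 (fun Kw => False_ind _ (nKw Kw))
    end).
  by exists f.
set c := mu0 - mu.
have cq : `|c| < mu0 by rewrite ltr_norml /c; apply/andP; split; lra.
set q := `|c| / mu0.
have q0 : 0 <= q by apply: divr_ge0 => //; exact: ltW.
have q1 : q < 1 by rewrite /q ltr_pdivrMr // mul1r.
pose u n := iter n (fun w => R0 (y + c%:C *: w)) 0.
have Ku : forall n, K (u n).
  by elim => [|n ih] /=; [exact: (K0 hK) | apply: (hR0 _ _).1; apply: KD => //; exact: KZ].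
have ru : forall n, Res mu0 (y + c%:C *: u n) (u n.+1).
  by move=> n; apply: (hR0 _ _).2; apply: KD => //; exact: KZ.
have contr : forall w1 x1 w2 x2, Res mu0 (y + c%:C *: w1) x1 ->
    Res mu0 (y + c%:C *: w2) x2 -> nv (x1 - x2) <= q * nv (w1 - w2).
  move=> w1 x1 w2 x2 r1 r2.
  have r3 := res_sub hS r1 r2.
  have e3 : y + c%:C *: w1 - (y + c%:C *: w2) = c%:C *: (w1 - w2).
    by rewrite opprD addrACA subrr add0r scalerBr.
  rewrite e3 in r3.
  have := res_bound hS mu00 r3; rewrite nvZ -ler_pdivlMl // mulrA [mu0^-1 * _]mulrC.
  by [].
have hgeo : forall n, nv (u n.+1 - u n) <= nv (u 1%N - u 0%N) * q ^+ n.
  elim => [|n ih]; first by rewrite expr0 mulr1.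
  apply: (le_trans (contr _ _ _ _ (ru n.+1) (ru n))).
  by rewrite exprS mulrCA; apply: ler_wpM2l.
have hq01 : 0 <= q < 1 by rewrite q0 q1.
have [l cl] := geo_conv hq01 hgeo.
have Kl : K l := conv_closed (K_closed hK) Ku cl.
have Kyl : K (y + c%:C *: l) by apply: KD => //; exact: KZ.
have [Kz rz] := hR0 _ Kyl.
set z := R0 _ in Kz rz.
have cz : convs u z.
  move=> e e0.
  have [N hN] := cl e e0.
  exists N.+1 => n hn.
  case: n hn => [//|n] hn.
  apply: (le_trans (contr _ _ _ _ (ru n) rz)).
  apply: (le_trans (ler_wpM2l q0 (hN n hn))).
  by rewrite ler_piMl // ltW.
have lz : l = z := conv_unique cl cz.
exists l; split => //.
rewrite /Res; move: rz; rewrite -lz /Res; congr gen.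
have hmc : mu0 - c = mu by rewrite /c; ring.
by rewrite opprD addrCA -scalerBl -rmorphB hmc addrC.
Qed.

Lemma chain_all : resP 1 -> forall mu, 0 < mu -> resP mu.
Proof.
move=> P1.
have hk : forall k : nat, forall mu, 0 < mu -> mu <= (3 / 2) ^+ k -> resP mu.
  elim => [|k ih] mu mu0.
    by rewrite expr0 => h1; apply: chain_step P1 mu0 _ => //; lra.
  move=> hmu.
  have p0 : 0 < (3 / 2 : R) ^+ k by apply: exprn_gt0; lra.
  apply: (chain_step p0 (ih _ p0 (le_refl _)) mu0).
  by move: hmu; rewrite exprS; lra.
have bern : forall k : nat, 1 + k%:R / 2 <= (3 / 2 : R) ^+ k.
  elim => [|k ih]; first by rewrite expr0 mul0r addr0.
  rewrite exprS -natr1.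
  have : 0 <= k%:R :> R by exact: ler0n.
  nra.
move=> mu mu0.
have [N _ hN] := nbhs_infty_ger (2 * mu).
apply: (hk N) => //.
apply: le_trans (bern N); have := hN N (leqnn _); lra.
Qed.

End Chain.


Section Cog.
Variable R : realType.
Variable V : completeNormedModType R[i].
Variable S : R -> V -> V.
Hypothesis hS : contractive_semigroup S.
Variable T : V -> V.
Hypothesis hT : cogenerator S T.

Local Notation gen := (gen S).
Local Notation Res := (Res S).

Lemma T_char y : exists x, Res 1 (- y) x /\ T y = y + (x + x).
Proof.
have [x [z [g hzx hTy]]] := hT y.
exists x; split.
  rewrite /Res rmorph1 scale1r opprK; have <- : z = x + y by rewrite -hzx addrC subrK.
  exact: g.
by rewrite hTy -hzx addrA subrK.
Qed.

Lemma T_fun y x : Res 1 (- y) x -> T y = y + (x + x).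
Proof.
move=> r; have [x' [r' ->]] := T_char y.
by rewrite (res_uniq hS ltr01 r' r).
Qed.

Lemma T_lin a y1 y2 : T (a *: y1 + y2) = a *: T y1 + T y2.
Proof.
have [x1 [r1 ->]] := T_char y1; have [x2 [r2 ->]] := T_char y2.
have r := res_lin hS (a:=a) r1 r2.
rewrite scalerN -opprD in r; rewrite (T_fun r).
by rewrite !scalerDr [a *: x1 + x2 + _]addrACA [a *: y1 + y2 + _]addrACA.
Qed.

Lemma T_bound y : nv (T y) <= 3 * nv y.
Proof.
have [x [r ->]] := T_char y.
have := res_bound hS ltr01 r; rewrite mul1r nvN => hx.
apply: (le_trans (nvD _ _)); have := nvD x x; lra.
Qed.

Lemma TK_of_SK (K : set V) : closed_subspace K ->
  (forall t, 0 <= t -> forall v, K v -> K (S t v)) ->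
  forall y, K y -> K (T y).
Proof.
move=> hK KS y Ky; have [x [r ->]] := T_char y.
have Kx : K x := resK hS hK KS ltr01 (KN hK Ky) r.
by apply: KD => //; apply: KD.
Qed.

Lemma SK_of_TK (K : set V) : closed_subspace K ->
  (forall y, K y -> K (T y)) ->
  forall t, 0 <= t -> forall v, K v -> K (S t v).
Proof.
move=> hK KT; apply: (expK hS hK); apply: (chain_all hS hK).
move=> y Ky; have [x [r hTy]] := T_char (- y).
rewrite opprK in r; exists x; split => //.
have KT' : K (T (- y) + y) by apply: KD => //; apply: KT; exact: KN.
rewrite hTy addrC addrA subrr add0r in KT'.
have -> : x = (2%:R : R[i])^-1 *: (x + x).
  have e2 : x + x = (2%:R : R[i]) *: x by rewrite scaler_nat mulr2n.
  by rewrite e2 scalerA mulVf ?scale1r // pnatr_eq0.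
exact: KZ.
Qed.

End Cog.


Section Span.
Variable R : realType.
Variable V : completeNormedModType R[i].

Lemma span_sub (A : set V) x : A x -> Defs.span A x.
Proof.
move=> Ax; exists 1%N, (fun _ => 1), (fun _ => x); split => //.
by rewrite big_ord1 scale1r.
Qed.

Lemma span0 (A : set V) : Defs.span A 0.
Proof. by exists 0%N, (fun _ => 0), (fun _ => 0); split => [[]//|]; rewrite big_ord0. Qed.

Lemma span_lin (A : set V) a x y : Defs.span A x -> Defs.span A y -> Defs.span A (a *: x + y).
Proof.
move=> [m1 [c1 [f1 [hf1 ->]]]] [m2 [c2 [f2 [hf2 ->]]]].
exists (m1 + m2)%N.
exists (fun i => match fintype.split (i : 'I_(m1 + m2)) with inl j => a * c1 j | inr j => c2 j end).
exists (fun i => match fintype.split (i : 'I_(m1 + m2)) with inl j => f1 j | inr j => f2 j end).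
split.
  by move=> k; case: (fintype.split k).
rewrite big_split_ord /=; congr (_ + _).
  rewrite scaler_sumr; apply: eq_bigr => i _.
  by rewrite (unsplitK (inl i)) scalerA.
by apply: eq_bigr => i _; rewrite (unsplitK (inr i)).
Qed.

Lemma cs_sub (A : set V) : A `<=` closed_span A.
Proof. by move=> x Ax; apply: subset_closure; exact: span_sub. Qed.

Lemma cs_subspace (A : set V) : closed_subspace (closed_span A).
Proof.
split; first exact: closed_closure.
  by apply: subset_closure; exact: span0.
move=> a x y cx cy; apply: closure_eps => e e0.
set c := complex.Re `|a| + 1.
have c0 : 0 < c by rewrite /c; have := na_ge0 a; lra.
have e1 : 0 < e / (2 * c) by apply: divr_gt0 => //; lra.
have e2 : 0 < e / 2 by lra.
have [x' [sx hx]] := closure_epsP cx e1.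
have [y' [sy hy]] := closure_epsP cy e2.
exists (a *: x' + y'); split; first exact: span_lin.
rewrite opprD addrACA -scalerBr.
apply: (le_trans (nvD _ _)); rewrite nvZc.
have := na_ge0 a; have := nv_ge0 (x - x').
move: (nv (x - x')) (nv (y - y')) hx hy => p q hp hq p0 a0.
have : complex.Re `|a| * p <= c * (e / (2 * c)).
  by apply: ler_pM => //; rewrite /c; lra.
have -> : c * (e / (2 * c)) = e / 2.
  by field; rewrite gt_eqF.
lra.
Qed.

Lemma cs_min (A K : set V) : closed_subspace K -> A `<=` K -> closed_span A `<=` K.
Proof.
move=> hK AK.
have sK : Defs.span A `<=` K.
  move=> _ [m [c [f [hf ->]]]].
  elim/big_ind: _ => //; first exact: (K0 hK).
    by move=> x y; apply: KD.
  by move=> i _; apply: KZ => //; apply: AK.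
move=> x cx; apply: (K_closed hK); exact: (closureS sK).
Qed.

Lemma cs_mono (A B : set V) : A `<=` B -> closed_span A `<=` closed_span B.
Proof.
move=> AB; apply: cs_min; first exact: cs_subspace.
by move=> x /AB; apply: cs_sub.
Qed.

Definition linf (f : V -> V) := forall a x y, f (a *: x + y) = a *: f x + f y.
Definition lipf (f : V -> V) := exists2 C : R, 0 <= C & forall x, nv (f x) <= C * nv x.

Lemma linf0 f : linf f -> f 0 = 0.
Proof.
move=> lf; have := lf 1 0 0; rewrite !scale1r !addr0 => h.
have : f 0 + 0 = f 0 + f 0 by rewrite addr0 -h.
by move/addrI => <-.
Qed.

Lemma linfB f x y : linf f -> f (x - y) = f x - f y.
Proof.
move=> lf; have := lf (-1) y x; rewrite !scaleN1r => h.
by rewrite addrC h addrC.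
Qed.

Lemma cs_image (A B : set V) (f : V -> V) : linf f -> lipf f ->
  (forall a, A a -> closed_span B (f a)) ->
  forall v, closed_span A v -> closed_span B (f v).
Proof.
move=> lf [C C0 hC] hA.
have hB := cs_subspace B.
have hK : closed_subspace [set v | closed_span B (f v)].
  split.
  - move=> v cv; apply: (K_closed hB); apply: closure_eps => e e0.
    have e1 : 0 < e / (C + 1) by apply: divr_gt0 => //; lra.
    have [v' [Kv' hv]] := closure_epsP cv e1.
    exists (f v'); split => //; rewrite -linfB //.
    apply: (le_trans (hC _)).
    have : C * nv (v - v') <= (C + 1) * (e / (C + 1)).
      by apply: ler_pM => //; [exact: nv_ge0 | lra].
    have -> : (C + 1) * (e / (C + 1)) = e by field; lra.
    by [].
  - by rewrite /= linf0 //; exact: (K0 hB).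
  - by move=> a x y /= hx hy; rewrite lf; apply: (K_lin hB).
move=> v; apply: (cs_min hK) => a Aa; exact: hA.
Qed.

End Span.


Section Orb.
Variable R : realType.
Variable V : completeNormedModType R[i].
Variable n : nat.

Fixpoint orbL (P : 'I_n -> (V -> V) -> Prop) (H : set V) (l : seq 'I_n) : set V :=
  match l with
  | [::] => H
  | j :: l' => [set v | exists g w, [/\ P j g, orbL P H l' w & v = g w]]
  end.

Lemma foldr_orbL P H (F : 'I_n -> V -> V) h l : (forall j, P j (F j)) -> H h ->
  orbL P H l (foldr (fun j v => F j v) h l).
Proof.
move=> PF Hh; elim: l => [|j l ih] //=.
by exists (F j), (foldr (fun j v => F j v) h l); split.
Qed.

Lemma eq_foldr_in (A : Type) (Op : 'I_n -> A -> V -> V) (p p' : 'I_n -> A) h l :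
  (forall i, i \in l -> p' i = p i) ->
  foldr (fun j v => Op j (p' j) v) h l = foldr (fun j v => Op j (p j) v) h l.
Proof.
elim: l => [|j l ih] //= hp.
rewrite hp ?mem_head //; congr (Op j _ _); apply: ih => i il.
by apply: hp; rewrite in_cons il orbT.
Qed.

Lemma orbL_foldr (A : Type) (Op : 'I_n -> A -> V -> V) (adm : A -> Prop) (a0 : A)
  (ha0 : adm a0) H l v : uniq l ->
  orbL (fun j g => exists a, adm a /\ g = Op j a) H l v ->
  exists h (p : 'I_n -> A), [/\ H h, forall j, adm (p j) &
     v = foldr (fun j v => Op j (p j) v) h l].
Proof.
elim: l v => [|j l ih] v /=.
  by move=> _ Hv; exists v, (fun _ => a0).
move=> /andP[jl ul] [g [w [[a [ha ->]] ow ->]]].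
have [h [p [Hh hp ->]]] := ih w ul ow.
exists h, (fun i => if i == j then a else p i); split => //.
  by move=> i; case: (i == j).
rewrite eqxx (@eq_foldr_in A Op p) // => i il.
by case: eqP => // ij; move: jl; rewrite -ij il.
Qed.

Lemma orb_transfer (P1 P2 : 'I_n -> (V -> V) -> Prop) H :
  (forall j (K : set V), closed_subspace K ->
     (forall g, P2 j g -> forall v, K v -> K (g v)) ->
     forall g, P1 j g -> forall v, K v -> K (g v)) ->
  (forall j, exists2 g, P2 j g & forall v, g v = v) ->
  (forall j g g', P2 j g -> P2 j g' -> P2 j (fun v => g (g' v))) ->
  (forall j g, P2 j g -> linf g /\ lipf g) ->
  forall l, orbL P1 H l `<=` closed_span (orbL P2 H l).
Proof.
move=> htr hid hcomp hlin; elim => [|j l ih] /=; first exact: cs_sub.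
move=> _ [g1 [w [P1g ow ->]]].
set K := closed_span _.
have hK : closed_subspace K := cs_subspace _.
have inv : forall g, P2 j g -> forall v, K v -> K (g v).
  move=> g P2g v Kv.
  have [lg Lg] := hlin j g P2g.
  apply: (cs_image lg Lg _ Kv) => _ [g' [w' [P2g' ow' ->]]].
  apply: cs_sub; exists (fun v => g (g' v)), w'; split => //.
  exact: hcomp.
have Kw : K w.
  apply: (cs_mono _ (ih _ ow)) => x ox.
  have [gi Pgi hgi] := hid j.
  by exists gi, x; split.
exact: (htr j K hK inv g1 P1g w Kw).
Qed.

End Orb.

Local Close Scope complex_scope.
Unset Implicit Arguments.
Set Strict Implicit.
Set Printing Implicit Defensive.


Lemma iter_linf (R : realType) (V : completeNormedModType R[i]) (f : V -> V) m :
  linf f -> linf (iter m f).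
Proof.
move=> lf; elim: m => [|m ih] a x y //=.
by rewrite ih lf.
Qed.

Lemma iter_lipf (R : realType) (V : completeNormedModType R[i]) (f : V -> V) m :
  (forall x, nv (f x) <= 3 * nv x) -> lipf (iter m f).
Proof.
move=> hf; exists (3 ^+ m); first exact: exprn_ge0.
elim: m => [|m ih] x /=; first by rewrite expr0 mul1r.
apply: (le_trans (hf _)); rewrite exprS -mulrA; apply: ler_wpM2l => //.
Qed.

Theorem mainTheorem13 (R : realType) (V : completeNormedModType R[i])
  (ip : V -> V -> R[i]) (hip : is_inner_product_of_norm ip)
  (n : nat) (S : 'I_n -> R -> V -> V) (T : 'I_n -> V -> V)
  (hS : forall j, contractive_semigroup (S j))
  (hT : forall j, cogenerator (S j) (T j))
  (hcomm : commuting_semigroups S)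
  (H : set V) (hH : closed_subspace H) :
  closed_span (semigroup_orbit S H) = setT <->
  closed_span (cogenerator_orbit T H) = setT.
Proof.
pose PS := fun (j : 'I_n) (g : V -> V) => exists t : R, 0 <= t /\ g = S j t.
pose PT := fun (j : 'I_n) (g : V -> V) => exists m : nat, True /\ g = iter m (T j).
have linT : forall j m, linf (iter m (T j)).
  move=> j m; apply: iter_linf; exact: (T_lin (hS j) (hT j)).
have lipT : forall j m, lipf (iter m (T j)).
  move=> j m; apply: iter_lipf; exact: (T_bound (hS j) (hT j)).
have linS : forall j g, PS j g -> linf g /\ lipf g.
  move=> j g [t [t0 ->]]; split.
    by move=> a x y; have := S_lin (hS j) t0 a x y.
  by exists 1 => // x; rewrite mul1r; have := S_contr (hS j) x t0.
have linT' : forall j g, PT j g -> linf g /\ lipf g.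
  by move=> j g [m [_ ->]]; split.
have idS : forall j, exists2 g, PS j g & forall v, g v = v.
  by move=> j; exists (S j 0); [exists 0 | move=> v; have := S0 (hS j) v].
have idT : forall j, exists2 g, PT j g & forall v, g v = v.
  by move=> j; exists (iter 0 (T j)); [exists 0%N | ].
have compS : forall j g g', PS j g -> PS j g' -> PS j (fun v => g (g' v)).
  move=> j g g' [t [t0 ->]] [t' [t0' ->]]; exists (t + t'); split.
    exact: addr_ge0.
  by apply/funext => v; rewrite (S_add (hS j)).
have compT : forall j g g', PT j g -> PT j g' -> PT j (fun v => g (g' v)).
  move=> j g g' [m [_ ->]] [m' [_ ->]]; exists (m + m')%N; split => //.
  by apply/funext => v; rewrite iterD.
have trA : forall j (K : set V), closed_subspace K ->
     (forall g, PS j g -> forall v, K v -> K (g v)) ->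
     forall g, PT j g -> forall v, K v -> K (g v).
  move=> j K hK inv g [m [_ ->]].
  have KT : forall y, K y -> K (T j y).
    apply: (TK_of_SK (hS j) (hT j) hK) => t t0 v Kv.
    by apply: (inv (S j t)) => //; exists t.
  by elim: m => [|m ih] v Kv //=; apply: KT; apply: ih.
have trB : forall j (K : set V), closed_subspace K ->
     (forall g, PT j g -> forall v, K v -> K (g v)) ->
     forall g, PS j g -> forall v, K v -> K (g v).
  move=> j K hK inv g [t [t0 ->]].
  apply: (SK_of_TK (hS j) (hT j) hK) => // y Ky.
  by apply: (inv (iter 1 (T j))) => //; exists 1%N.
have sg_orb : semigroup_orbit S H `<=` orbL PS H (enum 'I_n).
  move=> _ [h [t [Hh t0 ->]]]; rewrite /compose_all.
  by apply: foldr_orbL => // j; exists (t j).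
have cog_orb : cogenerator_orbit T H `<=` orbL PT H (enum 'I_n).
  move=> _ [h [m [Hh ->]]]; rewrite /compose_all.
  by apply: foldr_orbL => // j; exists (m j).
have orb_sg : orbL PS H (enum 'I_n) `<=` semigroup_orbit S H.
  move=> v ov.
  have [h [p [Hh hp ->]]] := @orbL_foldr R V n R (fun j t => S j t) (fun t => 0 <= t)
     0 (lexx 0) H (enum 'I_n) v (enum_uniq _) ov.
  by exists h, p; split.
have orb_cog : orbL PT H (enum 'I_n) `<=` cogenerator_orbit T H.
  move=> v ov.
  have [h [p [Hh _ ->]]] := @orbL_foldr R V n nat (fun j m => iter m (T j))
     (fun _ => True) 0%N I H (enum 'I_n) v (enum_uniq _) ov.
  by exists h, p; split.
have incl1 : closed_span (semigroup_orbit S H) `<=` closed_span (cogenerator_orbit T H).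
  apply: cs_min; first exact: cs_subspace.
  move=> v /sg_orb ov.
  have := orb_transfer trB idT compT linT' ov.
  by move=> hv; have := (cs_mono orb_cog) v hv.
have incl2 : closed_span (cogenerator_orbit T H) `<=` closed_span (semigroup_orbit S H).
  apply: cs_min; first exact: cs_subspace.
  move=> v /cog_orb ov.
  have := orb_transfer trA idS compS linS ov.
  by move=> hv; have := (cs_mono orb_sg) v hv.
split => h; apply/seteqP; split => // v _.
  by apply: incl1; rewrite h.
by apply: incl2; rewrite h.
Qed.
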